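(* Let $\mathfrak g$, $m$, $\mathbb C(y)$, $a_i(n)$ and the maps $r_i$ ($i\in S$) be as in the context, and put $X^i_n:=a_i(n)^{-1}$. Let $\mathbf Y_{\chi_\varepsilon}\subset\mathbb C(y)$ be the intersection over $i\in S$ of the subrings generated by $\{y_j(n)^{\pm1}: j\ne i,\ n\in d\mathbb Z/d'm\mathbb Z\}$ together with $\{y_i(n)(1+X^i_n): n\in d\mathbb Z/d'm\mathbb Z\}$ (the image of the $q$-character at a root of unity $q$ with $q^{2d'm}=1$). Then $\mathbf Y_{\chi_\varepsilon}$ is invariant under the action of $W(\mathfrak g)$ generated by the $r_i$: $r_i(f)=f$ for all $f\in\mathbf Y_{\chi_\varepsilon}$ and all $i\in S$.
   Context: Let $\mathfrak g$ be a finite-dimensional complex simple Lie algebra of rank $\ell$, $S=\{1,\dots,\ell\}$, of type $A_\ell$, $B_\ell$, $C_\ell$, $D_\ell$ ($\ell\ge4$), $E_{6,7,8}$, $F_4$ or $G_2$, labelled: $A_\ell,B_\ell,C_\ell$ chain $1-\cdots-\ell$ ($\alpha_\ell$ short in $B_\ell$, long in $C_\ell$); $D_\ell$: chain $1-\cdots-(\ell-1)$ plus edge $(\ell-2)-\ell$; $E_\ell$: chain $1-2-3-5-\cdots-\ell$ plus edge $3-4$; $F_4$: chain $1-2-3-4$, $\alpha_1,\alpha_2$ long; $G_2$: $\alpha_2$ long. $d_i=(\alpha_i,\alpha_i)/2$: $1$ in types $A,D,E$; $(1,\dots,1,\frac12)$ for $B_\ell$; $(1,\dots,1,2)$ for $C_\ell$;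 $(1,1,\frac12,\frac12)$ for $F_4$; $(1,3)$ for $G_2$; $d=\min d_i$, $d'=\max d_i$. Let $m$ be an integer, $m>1$, $m>\ell-1$. Quiver $Q_m(\mathfrak g)$ on $\{v^i_n: i\in S, n\in d\mathbb Z/d'm\mathbb Z\}$ with arrows (indices mod $d'm$): (simply-laced) orient Dynkin edges from larger to smaller label ($C(\mathfrak g)$); $v^i_n\to v^i_{n+1}$, and for each $i\to j$ in $C(\mathfrak g)$, $v^i_n\to v^j_n$ and $v^j_{n+1}\to v^i_n$. ($B_\ell$) $v^i_n\to v^i_{n+1}$ ($i\le\ell-1$); $v^i_n\to v^{i-1}_n$, $v^{i-1}_{n+1}\to v^i_n$ ($2\le i\le\ell-1$); $v^\ell_n\to v^\ell_{n+1/2}$, $v^\ell_n\to v^{\ell-1}_{n-1/2}$, $v^{\ell-1}_{n+1/2}\to v^\ell_n$. ($C_\ell$) $v^i_n\to v^i_{n+1}$ ($i\le\ell-1$); $v^i_n\to v^{i-1}_n$, $v^{i-1}_{n+1}\to v^i_n$ ($2\le i\le\ell-1$); $v^\ell_n\to v^\ell_{n+2}$, $v^\ell_n\to v^{\ell-1}_n$, $v^{\ell-1}_{n+2}\to v^\ell_n$. ($F_4$) $v^i_n\to v^i_{n+1}$ ($i=1,2$); $v^2_n\to v^1_n$, $v^1_{n+1}\to v^2_n$; $v^3_n\to v^3_{n+1/2}$, $v^3_n\to v^2_{n-1/2}$, $v^2_{n+1/2}\to v^3_n$; $v^4_n\to v^4_{n+1/2}$, $v^4_n\to v^3_n$, $v^3_{n+1/2}\to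 v^4_n$. ($G_2$) $v^1_n\to v^1_{n+1}$, $v^2_n\to v^2_{n+3}$, $v^2_n\to v^1_n$, $v^1_{n+3}\to v^2_n$. $\mathbb C(y)$ is the field of rational functions in $y_i(n)$, $i\in S$, $n\in d\mathbb Z/d'm\mathbb Z$; $a_i(n)=y_i(n)y_i(n+d_i)/F(i,n)$ with $F(i,n)=\prod_{j:\,v^i_n\to v^j_n}y_j(n+d_j)\prod_{j:\,v^j_n\to v^i_n}y_j(n)$, except $F(i,n)=y_{i-1}(n+\frac12)y_{i+1}(n)$ for $i=\ell$ in $B_\ell$ and $i=3$ in $F_4$; $F(i,n)=y_{i-1}(n+1)y_{i+1}(n)y_{i+1}(n+\frac12)$ for $i=\ell-1$ in $B_\ell$ and $i=2$ in $F_4$; $F(\ell,n)=y_{\ell-1}(n+1)y_{\ell-1}(n+2)$ in $C_\ell$; $F(2,n)=y_1(n+1)y_1(n+2)y_1(n+3)$ in $G_2$; with $y_0:=y_{\ell+1}:=1$. $f_y(i,n)=1+\sum_{k=0}^{d'm/d_i-2}(a_i(n)a_i(n-d_i)\cdots a_i(n-kd_i))^{-1}$, and $r_i$ is the field endomorphism of $\mathbb C(y)$ with $r_i(y_i(n))=\frac{f_y(i,n-2d_i)}{f_y(i,n-d_i)}\frac{F(i,n-d_i)}{y_i(n-d_i)}$, $r_i(y_j(n))=y_j(n)$ for $j\ne i$. These $r_i$ generate an action of the Weyl group $W(\mathfrak g)$ on $\mathbb C(y)$. *)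

(* Defs.v *)
From HB Require Import structures.
From mathcomp Require Import all_boot all_order all_algebra.
From mathcomp Require Import Rstruct complex mpoly.

Unset Implicit Arguments.
Unset Strict Implicit.
Unset Printing Implicit Defensive.
Import Order.TTheory GRing.Theory Num.Theory.
Local Open Scope ring_scope.
Local Notation "x %:F" := (@FracField.tofrac _ x) : ring_scope.

Definition Cc : fieldType := (Rdefinitions.R)[i].

(* Cartan types.  Labels of simple roots are 1..l (nat).                *)
Inductive ltype := TA | TB | TC | TD | TE | TF | TG.

Definition valid_type (t : ltype) (l : nat) : bool :=
  match t with
  | TA => (1 <= l)%N
  | TB => (2 <= l)%N
  | TC => (2 <= l)%N
  | TD => (4 <= l)%N
  | TE => (6 <= l <= 8)%N
  | TF => l == 4%N
  | TG => l == 2%N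
  end.

(* d_i = (alpha_i, alpha_i)/2 *)
Definition di (t : ltype) (l i : nat) : rat :=
  match t with
  | TB => if i == l then 1 / 2 else 1
  | TC => if i == l then 2 else 1
  | TF => if (i <= 2)%N then 1 else 1 / 2
  | TG => if i == 2%N then 3 else 1
  | _ => 1
  end.

Definition dmin (t : ltype) (l : nat) : rat :=
  \big[Num.min/di t l 1]_(i <- iota 1 l) di t l i.
Definition dmax (t : ltype) (l : nat) : rat :=
  \big[Num.max/di t l 1]_(i <- iota 1 l) di t l i.

(* Positions n in d Z are encoded by integers k with n = k * d.
   A (rational) shift s (a multiple of d) is encoded by s / d. *)
Definition sh (t : ltype) (l : nat) (s : rat) : int := numq (s / dmin t l).

(* d' m / d : the number of classes of d Z / d' m Z *)
Definition NN (t : ltype) (l m : nat) : int :=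
  numq (dmax t l * m%:R / dmin t l).

Definition eqpos (t : ltype) (l m : nat) (k k' : int) : bool :=
  (k == k' %[mod NN t l m])%Z.

(* Dynkin diagrams (simply-laced types) and the orientation C(g):
   edges oriented from larger to smaller label. *)
Definition dynkin_edge (t : ltype) (l i j : nat) : bool :=
  [&& (1 <= i)%N, (i < j)%N, (j <= l)%N &
  match t with
  | TA => j == i.+1
  | TD => ((j == i.+1) && (j <= l.-1)%N) || ((i == l - 2)%N && (j == l))
  | TE => [|| (i == 1%N) && (j == 2%N), (i == 2%N) && (j == 3%N),
             (i == 3%N) && (j == 4%N), (i == 3%N) && (j == 5%N)
           | (5 <= i)%N && (j == i.+1)]
  | _ => false
  end].

Definition Carrow (t : ltype) (l i j : nat) : bool := dynkin_edge t l j i.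

Definition qarrow (t : ltype) (l m : nat) (x : nat) (p : int) (y : nat) (q : int)
  : bool :=
  let E := eqpos t l m in
  let s := sh t l in
  [&& (1 <= x <= l)%N, (1 <= y <= l)%N &
  match t with
  | TA | TD | TE =>
      [|| (x == y) && E q (p + s 1),
          Carrow t l x y && E q p
        | Carrow t l y x && E q (p - s 1)]
  | TB =>
      [|| [&& x == y, (x <= l.-1)%N & E q (p + s 1)],
          [&& (2 <= x <= l.-1)%N, y == x.-1 & E q p],
          [&& (2 <= y <= l.-1)%N, x == y.-1 & E q (p - s 1)],
          [&& x == l, y == l & E q (p + s (1/2))],
          [&& x == l, y == l.-1 & E q (p + s (-(1/2)))]
        | [&& x == l.-1, y == l & E q (p - s (1/2))]]
  | TC =>
      [|| [&& x == y, (x <= l.-1)%N & E q (p + s 1)],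
          [&& (2 <= x <= l.-1)%N, y == x.-1 & E q p],
          [&& (2 <= y <= l.-1)%N, x == y.-1 & E q (p - s 1)],
          [&& x == l, y == l & E q (p + s 2)],
          [&& x == l, y == l.-1 & E q p]
        | [&& x == l.-1, y == l & E q (p - s 2)]]
  | TF =>
      [|| [&& x == y, (x <= 2)%N & E q (p + s 1)],
          [&& x == 2%N, y == 1%N & E q p],
          [&& x == 1%N, y == 2%N & E q (p - s 1)],
          [&& x == 3%N, y == 3%N & E q (p + s (1/2))],
          [&& x == 3%N, y == 2%N & E q (p + s (-(1/2)))],
          [&& x == 2%N, y == 3%N & E q (p - s (1/2))],
          [&& x == 4%N, y == 4%N & E q (p + s (1/2))],
          [&& x == 4%N, y == 3%N & E q p]
        | [&& x == 3%N, y == 4%N & E q (p - s (1/2))]]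
  | TG =>
      [|| [&& x == 1%N, y == 1%N & E q (p + s 1)],
          [&& x == 2%N, y == 2%N & E q (p + s 3)],
          [&& x == 2%N, y == 1%N & E q p]
        | [&& x == 1%N, y == 2%N & E q (p - s 3)]]
  end].

(* The field C(y) of rational functions in the y_i(n),
   i in 1..l, n in d Z / d' m Z.  Variable y_i(n) (n = k d) is 'X_(yvar i k). *)
Definition nvars (t : ltype) (l m : nat) : nat := (l * absz (NN t l m)).-1.+1.

Definition Cy (t : ltype) (l m : nat) : fieldType :=
  {fraction {mpoly Cc[nvars t l m]}}.

Definition yvar (t : ltype) (l m : nat) (i : nat) (k : int) : 'I_(nvars t l m) :=
  inord ((i.-1) * absz (NN t l m) + absz (k %% NN t l m)%Z)%N.

(* y_i(n), with the convention y_0 = y_{l+1} = 1 *)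
Definition yy (t : ltype) (l m : nat) (i : nat) (k : int) : Cy t l m :=
  if (1 <= i <= l)%N then ('X_(yvar t l m i k) : {mpoly Cc[nvars t l m]})%:F
  else 1.

Definition FF (t : ltype) (l m : nat) (i : nat) (k : int) : Cy t l m :=
  let y := yy t l m in
  let s := sh t l in
  match t with
  | TB =>
      if i == l then y l.-1 (k + s (1/2)) * y l.+1 k
      else if i == l.-1 then y (i.-1) (k + s 1) * y i.+1 k * y i.+1 (k + s (1/2))
      else \prod_(j <- iota 1 l)
             ((if qarrow t l m i k j k then y j (k + s (di t l j)) else 1) *
              (if qarrow t l m j k i k then y j k else 1))
  | TF =>
      if i == 3%N then y 2%N (k + s (1/2)) * y 4%N k
      else if i == 2%N then y 1%N (k + s 1) * y 3%N k * y 3%N (k + s (1/2))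
      else \prod_(j <- iota 1 l)
             ((if qarrow t l m i k j k then y j (k + s (di t l j)) else 1) *
              (if qarrow t l m j k i k then y j k else 1))
  | TC =>
      if i == l then y l.-1 (k + s 1) * y l.-1 (k + s 2)
      else \prod_(j <- iota 1 l)
             ((if qarrow t l m i k j k then y j (k + s (di t l j)) else 1) *
              (if qarrow t l m j k i k then y j k else 1))
  | TG =>
      if i == 2%N then y 1%N (k + s 1) * y 1%N (k + s 2) * y 1%N (k + s 3)
      else \prod_(j <- iota 1 l)
             ((if qarrow t l m i k j k then y j (k + s (di t l j)) else 1) *
              (if qarrow t l m j k i k then y j k else 1))
  | _ =>
      \prod_(j <- iota 1 l)
        ((if qarrow t l m i k j k then y j (k + s (di t l j)) else 1) *
         (if qarrow t l m j k i k then y j k else 1))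
  end.

Definition aa (t : ltype) (l m : nat) (i : nat) (k : int) : Cy t l m :=
  yy t l m i k * yy t l m i (k + sh t l (di t l i)) / FF t l m i k.

(* f_y(i, n) = 1 + sum_{p=0}^{d'm/d_i - 2} (a_i(n) a_i(n-d_i) ... a_i(n-p d_i))^{-1};
   here d'm/d_i = (d'm/d) / (d_i/d). *)
Definition fy (t : ltype) (l m : nat) (i : nat) (k : int) : Cy t l m :=
  let e := sh t l (di t l i) in
  1 + \sum_(p < (absz (NN t l m) %/ absz e).-1)
        (\prod_(q < p.+1) aa t l m i (k - q%:Z * e))^-1.

Definition r_img (t : ltype) (l m : nat) (i : nat) (v : 'I_(nvars t l m)) : Cy t l m :=
  let N := absz (NN t l m) in
  let j := ((v %/ N).+1)%N in
  let k : int := (v %% N)%N in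
  let e := sh t l (di t l i) in
  if j == i then
    fy t l m i (k - 2%:Z * e) / fy t l m i (k - e) * (FF t l m i (k - e) / yy t l m i (k - e))
  else ('X_v : {mpoly Cc[nvars t l m]})%:F.

Definition r_poly (t : ltype) (l m : nat) (i : nat) (P : {mpoly Cc[nvars t l m]})
  : Cy t l m :=
  mmap (fun c : Cc => (c%:MP : {mpoly Cc[nvars t l m]})%:F) (r_img t l m i) P.

Definition r (t : ltype) (l m : nat) (i : nat) (f : Cy t l m) : Cy t l m :=
  r_poly t l m i (\n_(repr f)) / r_poly t l m i (\d_(repr f)).

Inductive gen_subring {L : nzRingType} (G : L -> Prop) : L -> Prop :=
  | gsr_gen x : G x -> gen_subring G x
  | gsr_one : gen_subring G 1
  | gsr_sub x y : gen_subring G x -> gen_subring G y -> gen_subring G (x - y)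
  | gsr_mul x y : gen_subring G x -> gen_subring G y -> gen_subring G (x * y).

Definition Kgen (t : ltype) (l m : nat) (i : nat) (z : Cy t l m) : Prop :=
  (exists j k, [/\ (1 <= j <= l)%N, j != i & (z = yy t l m j k \/ z = (yy t l m j k)^-1)])
  \/ (exists k, z = yy t l m i k * (1 + (aa t l m i k)^-1)).

Definition Ychi (t : ltype) (l m : nat) (f : Cy t l m) : Prop :=
  forall i, (1 <= i <= l)%N -> gen_subring (Kgen t l m i) f.

(* Main.v *)
Require Import Defs.
From HB Require Import structures.
From mathcomp Require Import all_boot all_order all_algebra.
From mathcomp Require Import Rstruct complex mpoly.
From mathcomp Require Import generic_quotient.
From mathcomp Require Import ring lra zify.
Import Order.TTheory GRing.Theory Num.Theory.
Local Open Scope ring_scope.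
Local Notation "x %:F" := (@FracField.tofrac _ x) : ring_scope.

Module Helpers.
Set Implicit Arguments. Unset Strict Implicit.
Lemma frac_repr_mul (R : idomainType) (x : {fraction R}) :
  x * (\d_(repr x))%:F = (\n_(repr x))%:F.
Proof.
set y := repr x.
have -> : x = \pi_({fraction R})%qT y by rewrite reprK.
unlock FracField.tofrac.
transitivity (\pi_({fraction R})%qT (FracField.mulf y (Ratio \d_y 1))); first by rewrite FracField.pi_mul.
apply/eqmodP; rewrite /= FracField.equivfE /FracField.mulf /=.
rewrite !numden_Ratio ?oner_neq0 ?mulf_neq0 ?oner_neq0 //.
by rewrite !mulr1 mulrC.
exact: denom_ratioP.
exact: denom_ratioP.
Qed.
Lemma frac_repr (R : idomainType) (x : {fraction R}) :
  x = (\n_(repr x))%:F / (\d_(repr x))%:F.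
Proof.
rewrite -frac_repr_mul mulfK // tofrac_eq0; exact: denom_ratioP.
Qed.

Section PVal.
Variables (R : idomainType) (K : fieldType) (phi : {rmorphism R -> K}).

Definition pval (x : {fraction R}) (v : K) : Prop :=
  exists n d, [/\ d != 0, phi d != 0, x = n%:F / d%:F & v = phi n / phi d].

Lemma pval_uniq x v w : pval x v -> pval x w -> v = w.
Proof.
move=> [n [d [d0 pd0 -> ->]]] [n' [d' [d0' pd0' E ->]]].
have : (n * d')%:F = (n' * d)%:F.
  rewrite !rmorphM /=.
  have hd : d%:F != 0 by rewrite tofrac_eq0.
  have hd' : d'%:F != 0 by rewrite tofrac_eq0.
  move: E => /(congr1 (fun z => z * d%:F * d'%:F)).
  rewrite mulfVK // [n'%:F / _ * _ * _]mulrAC mulfVK // => ->; by rewrite mulrC.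
move/eqP; rewrite tofrac_eq => /eqP /(congr1 phi); rewrite !rmorphM /= => h.
by apply/eqP; rewrite eqr_div // h mulrC.
Qed.

Lemma pval_frac a : pval a%:F (phi a).
Proof.
exists a, 1; split; rewrite ?oner_eq0 ?rmorph1 ?oner_eq0 ?divr1 //.
Qed.

Lemma pval_add x y v w : pval x v -> pval y w -> pval (x + y) (v + w).
Proof.
move=> [n [d [d0 pd0 -> ->]]] [n' [d' [d0' pd0' -> ->]]].
exists (n * d' + n' * d), (d * d'); split.
- by rewrite mulf_neq0.
- by rewrite rmorphM mulf_neq0.
- have hd : d%:F != 0 by rewrite tofrac_eq0.
  have hd' : d'%:F != 0 by rewrite tofrac_eq0.
  by rewrite addf_div // !rmorphD !rmorphM.
- by rewrite addf_div // !rmorphD !rmorphM.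
Qed.

Lemma pval_mul x y v w : pval x v -> pval y w -> pval (x * y) (v * w).
Proof.
move=> [n [d [d0 pd0 -> ->]]] [n' [d' [d0' pd0' -> ->]]].
exists (n * n'), (d * d'); split.
- by rewrite mulf_neq0.
- by rewrite rmorphM mulf_neq0.
- by rewrite !rmorphM /= invfM; ring.
- by rewrite !rmorphM /= invfM; ring.
Qed.

Lemma pval_opp x v : pval x v -> pval (- x) (- v).
Proof.
move=> [n [d [d0 pd0 -> ->]]]; exists (- n), d; split => //.
- by rewrite rmorphN mulNr.
- by rewrite rmorphN mulNr.
Qed.

Lemma pval_sub x y v w : pval x v -> pval y w -> pval (x - y) (v - w).
Proof. by move=> h1 h2; apply: pval_add h1 (pval_opp h2). Qed.

Lemma pval_1 : pval 1 1.
Proof. by have := pval_frac 1; rewrite rmorph1 rmorph1. Qed.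

Lemma pval_0 : pval 0 0.
Proof. by have := pval_frac 0; rewrite rmorph0 rmorph0. Qed.

Lemma pval_inv x v : pval x v -> v != 0 -> pval x^-1 v^-1.
Proof.
move=> [n [d [d0 pd0 -> ->]]] hv.
have pn0 : phi n != 0 by move: hv; apply: contraNneq => ->; rewrite mul0r.
have n0 : n != 0 by move: pn0; apply: contraNneq => ->; rewrite rmorph0.
exists d, n; split => //; by rewrite invf_div.
Qed.

Lemma pval_div x y v w : pval x v -> pval y w -> w != 0 -> pval (x / y) (v / w).
Proof. by move=> h1 h2 hw; apply: pval_mul h1 (pval_inv h2 hw). Qed.

Lemma pval_neq0 x v : pval x v -> v != 0 -> x != 0.
Proof.
move=> h hv; apply/eqP => x0; move: h; rewrite x0 => h.
by move: hv; rewrite (pval_uniq h pval_0) eqxx.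
Qed.

Lemma pval_sum (I : Type) (s : seq I) (F : I -> {fraction R}) (G : I -> K) :
  (forall j, pval (F j) (G j)) -> pval (\sum_(j <- s) F j) (\sum_(j <- s) G j).
Proof.
move=> h; apply: (big_ind2 pval pval_0) => // a b c e; exact: pval_add.
Qed.

Lemma pval_prod (I : Type) (s : seq I) (F : I -> {fraction R}) (G : I -> K) :
  (forall j, pval (F j) (G j)) -> pval (\prod_(j <- s) F j) (\prod_(j <- s) G j).
Proof.
move=> h; apply: (big_ind2 pval pval_1) => // a b c e; exact: pval_mul.
Qed.

Lemma pval_total (inj : forall a, phi a = 0 -> a = 0) (x : {fraction R}) :
  pval x (phi \n_(repr x) / phi \d_(repr x)).
Proof.
exists \n_(repr x), \d_(repr x); split.
- exact: denom_ratioP.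
- by apply/eqP => /inj /eqP; rewrite (negbTE (denom_ratioP _)).
- exact: frac_repr.
- by [].
Qed.

End PVal.


Section Alg.
Variables (K : fieldType) (e : int) (M : nat) (Y Fv : int -> K).
Hypothesis M2 : (2 <= M)%N.
Hypothesis Y0 : forall x, Y x != 0.
Hypothesis Fv0 : forall x, Fv x != 0.
Hypothesis Yper : forall x, Y (x - M%:Z * e) = Y x.
Hypothesis Fvper : forall x, Fv (x - M%:Z * e) = Fv x.

Definition a x := Y x * Y (x + e) / Fv x.
Definition An x := (a x)^-1.
Definition f x := 1 + \sum_(p < M.-1) (\prod_(q < p.+1) a (x - q%:Z * e))^-1.
Definition G x := f (x - 2%:Z * e) / f (x - e) * (Fv (x - e) / Y (x - e)).
Definition aG x := G x * G (x + e) / Fv x.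
Definition V x := 1 + \sum_(p < M.-1) (\prod_(q < p.+1) aG (x - q%:Z * e))^-1.
Definition T x p := \prod_(q < p) An (x - q%:Z * e).
Definition P x := T x M.

Section Shift.
Variable d : int.
Hypothesis Yd : forall x, Y (x + d) = Y x.
Hypothesis Fd : forall x, Fv (x + d) = Fv x.
Lemma a_shift x : a (x + d) = a x.
Proof. by rewrite /a Yd Fd addrAC Yd. Qed.
Lemma f_shift x : f (x + d) = f x.
Proof.
rewrite /f; congr (1 + _); apply: eq_bigr => p _; congr (_^-1).
by apply: eq_bigr => q _; rewrite addrAC a_shift.
Qed.
Lemma G_shift x : G (x + d) = G x.
Proof. by rewrite /G !(addrAC x d) !f_shift Fd Yd. Qed.
End Shift.

Lemma a0 x : a x != 0.
Proof. by rewrite /a !mulf_neq0 ?invr_eq0. Qed.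
Lemma An0 x : An x != 0.
Proof. by rewrite /An invr_eq0 a0. Qed.
Lemma T0 x p : T x p != 0.
Proof. by rewrite /T; apply/prodf_neq0 => q _; exact: An0. Qed.
Lemma P0 x : P x != 0.
Proof. exact: T0. Qed.

Lemma a_per x : a (x - M%:Z * e) = a x.
Proof.
rewrite /a Yper Fvper; congr (_ * _ / _).
by rewrite -(Yper (x + e)); congr Y; ring.
Qed.
Lemma An_per x : An (x - M%:Z * e) = An x.
Proof. by rewrite /An a_per. Qed.

Lemma shiftS x q : x - (q.+1)%:Z * e = x - e - q%:Z * e.
Proof. rewrite intS; ring. Qed.

Lemma TS x p : T x p.+1 = An x * T (x - e) p.
Proof.
rewrite /T big_ord_recl /= mul0r subr0; congr (_ * _).
by apply: eq_bigr => q _; rewrite /bump /= shiftS.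
Qed.

Lemma fE x : f x = \sum_(p < M) T x p.
Proof.
have -> : M = M.-1.+1 by case: M M2.
rewrite big_ord_recl /T big_ord0 /f; congr (_ + _).
apply: eq_bigr => p _; rewrite -prodfV; apply: eq_bigr => q _; by [].
Qed.

Lemma f_rec x : f x = 1 - P x + An x * f (x - e).
Proof.
have hM : M = M.-1.+1 by case: M M2.
rewrite !fE /P.
rewrite hM big_ord_recl big_ord_recr /=.
rewrite TS.
have -> : T x 0 = 1 by rewrite /T big_ord0.
rewrite mulrDr.
have -> : \sum_(i < M.-1) T x (bump 0 i) = An x * \sum_(i < M.-1) T (x - e) i.
  by rewrite big_distrr; apply: eq_bigr => q _; rewrite /bump /= TS.
ring.
Qed.

Lemma P_shift x : P (x - e) = P x.
Proof.
have hM : M = M.-1.+1 by case: M M2.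
rewrite /P hM [RHS]TS /T big_ord_recr /= mulrC; congr (_ * _).
rewrite -(An_per x); congr An; rewrite [in RHS]hM intS; ring.
Qed.


Lemma P_const x j : P (x - j%:Z * e) = P x.
Proof.
elim: j => [|j IH]; first by rewrite mul0r subr0.
have -> : x - j.+1%:Z * e = (x - j%:Z * e) - e by rewrite intS; ring.
by rewrite P_shift IH.
Qed.

Lemma f_per x : f (x - M%:Z * e) = f x.
Proof.
rewrite /f; congr (1 + _); apply: eq_bigr => p _; congr (_^-1).
apply: eq_bigr => q _; rewrite -(a_per (x - q%:Z * e)); congr a; ring.
Qed.

Hypothesis f0 : forall x, f x != 0.
Hypothesis P1 : forall x, P x != 1.

Lemma aG_eq y : aG y = f (y - 2%:Z * e) * An (y - e) / f y.
Proof.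
rewrite /aG /G /An /a.
have -> : y + e - 2%:Z * e = y - e by ring.
have -> : y + e - e = y by ring.
have -> : y - e + e = y by ring.
have := f0 y; have := f0 (y - e); have := f0 (y - 2%:Z * e).
have := Y0 y; have := Y0 (y - e); have := Fv0 y; have := Fv0 (y - e).
move=> *; field.
by rewrite !f0 !Fv0 !Y0.
Qed.

Lemma G0 x : G x != 0.
Proof. by rewrite /G !mulf_neq0 ?invr_eq0. Qed.

Lemma R3 x : G x * (1 + (aG x)^-1) = Y x * (1 + An x).
Proof.
rewrite aG_eq.
have hA : Fv (x - e) = An (x - e) * (Y (x - e) * Y x).
  by rewrite /An /a subrK invf_div mulfVK // mulf_neq0.
have r1 := f_rec x.
have r2 := f_rec (x - e).
rewrite P_shift in r2.
have e2 : x - e - e = x - 2%:Z * e by ring.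
rewrite e2 in r2.
have hc : 1 - P x = f (x - e) - An (x - e) * f (x - 2%:Z * e).
  by rewrite [in RHS]r2; ring.
rewrite /G r1 hc hA.
have := f0 (x - 2%:Z * e); have := f0 (x - e); have := An0 (x - e).
have := Y0 x; have := Y0 (x - e).
move=> *; field.
have hf : f (x - e) - An (x - e) * f (x - 2%:Z * e) + An x * f (x - e) != 0.
  by rewrite -hc -r1 f0.
by rewrite hf ?f0 ?Y0 ?An0.
Qed.

Section Tele.
Variable x : int.
Let Fn j := f (x - j%:Z * e).
Let Bn j := An (x - j%:Z * e).
Let c := 1 - P x.

Lemma Fn_rec j : Fn j = c + Bn j * Fn j.+1.
Proof.
rewrite /Fn /Bn /c f_rec P_const.
by have -> : x - j%:Z * e - e = x - j.+1%:Z * e by rewrite intS; ring.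
Qed.

Lemma Fn0 j : Fn j != 0. Proof. exact: f0. Qed.
Lemma Bn0 j : Bn j != 0. Proof. exact: An0. Qed.
Lemma PB0 p : \prod_(q < p) Bn q.+1 != 0.
Proof. by apply/prodf_neq0 => q _; exact: Bn0. Qed.

Lemma aGinv q : (aG (x - q%:Z * e))^-1 = Fn q / (Fn q.+2 * Bn q.+1).
Proof.
rewrite aG_eq /Fn /Bn.
have -> : x - q%:Z * e - 2%:Z * e = x - q.+2%:Z * e by rewrite !intS; ring.
have -> : x - q%:Z * e - e = x - q.+1%:Z * e by rewrite !intS; ring.
by rewrite invf_div.
Qed.

Lemma Qprod p : \prod_(q < p) (Fn q / (Fn q.+2 * Bn q.+1)) =
  Fn 0 * Fn 1 / (Fn p * Fn p.+1 * \prod_(q < p) Bn q.+1).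
Proof.
elim: p => [|p IH].
  rewrite !big_ord0; have := Fn0 0; have := Fn0 1; move=> *; field.
  by rewrite !Fn0.
rewrite !big_ord_recr /= IH.
have := Fn0 0; have := Fn0 1; have := Fn0 p; have := Fn0 p.+1; have := Fn0 p.+2.
have := Bn0 p.+1; have := PB0 p.
move=> *; field.
by rewrite ?Fn0 ?Bn0 ?PB0.
Qed.

Lemma telesc j : c * \sum_(p < j) (Fn 0 * Fn 1 / (Fn p.+1 * Fn p.+2 * \prod_(q < p.+1) Bn q.+1))
  = Fn 0 * Fn 1 * (1 / (Fn j.+1 * \prod_(q < j) Bn q.+1) - 1 / Fn 1).
Proof.
elim: j => [|j IH].
  rewrite !big_ord0; have := Fn0 1; move=> *; field.
  by rewrite ?Fn0.
rewrite big_ord_recr /= mulrDr IH.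
rewrite [\prod_(q < j.+1) _]big_ord_recr /=.
have hc : c = Fn j.+1 - Bn j.+1 * Fn j.+2 by rewrite [Fn j.+1]Fn_rec; ring.
rewrite hc.
have := Fn0 0; have := Fn0 1; have := Fn0 j.+1; have := Fn0 j.+2.
have := Bn0 j.+1; have := PB0 j.
move=> *; field.
by rewrite ?Fn0 ?Bn0 ?PB0.
Qed.

Lemma R1 : V x = An x * f (x - e) / P x.
Proof.
have hM : M = M.-1.+1 by case: M M2.
have hFM : Fn M = Fn 0 by rewrite /Fn f_per mul0r subr0.
have hP : P x = Bn 0 * \prod_(q < M.-1) Bn q.+1.
  by rewrite /P /T hM big_ord_recl.
have hF0 : Fn 0 = f x by rewrite /Fn mul0r subr0.
have hB0 : Bn 0 = An x by rewrite /Bn mul0r subr0.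
have hF1 : Fn 1 = f (x - e) by rewrite /Fn mul1r.
have hS : \sum_(p < M.-1) (\prod_(q < p.+1) aG (x - q%:Z * e))^-1 =
          \sum_(p < M.-1) (Fn 0 * Fn 1 / (Fn p.+1 * Fn p.+2 * \prod_(q < p.+1) Bn q.+1)).
  apply: eq_bigr => p _; rewrite -prodfV -Qprod; apply: eq_bigr => q _.
  exact: aGinv.
have ht := telesc M.-1.
rewrite -hM hFM in ht.
have hc0 : c != 0 by rewrite /c subr_eq0 eq_sym P1.
have hS' : \sum_(p < M.-1) (Fn 0 * Fn 1 / (Fn p.+1 * Fn p.+2 * \prod_(q < p.+1) Bn q.+1))
   = Fn 0 * Fn 1 * (1 / (Fn 0 * \prod_(q < M.-1) Bn q.+1) - 1 / Fn 1) / c.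
  by rewrite -ht [c * _]mulrC mulfK.
rewrite /V hS hS' -hB0 -hF1.
have h0 := Fn_rec 0.
rewrite /c hP in h0 hS' *.
move: (PB0 M.-1) (Fn0 0) (Fn0 1) (Bn0 0) (P1 x) hc0.
rewrite /c hP h0.
set pi := \prod_(q < M.-1) Bn q.+1.
move=> H1 H2 H3 H4 H5 H6; field.
by rewrite H1 H2 H3 H4 H6.
Qed.
End Tele.

Lemma V0 x : V x != 0.
Proof. by rewrite R1; apply: mulf_neq0; [apply: mulf_neq0|]; rewrite ?invr_eq0 ?a0 ?f0 ?P0. Qed.

Lemma R2 x : V (x - 2%:Z * e) / V (x - e) * (Fv (x - e) / G (x - e)) = Y x.
Proof.
rewrite !R1 /G (P_const x 2) P_shift.
have -> : x - 2%:Z * e - e = x - 3%:Z * e by ring.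
have -> : x - e - 2%:Z * e = x - 3%:Z * e by ring.
have -> : x - e - e = x - 2%:Z * e by ring.
have -> : An (x - 2%:Z * e) = Fv (x - 2%:Z * e) / (Y (x - 2%:Z * e) * Y (x - e)).
  rewrite /An /a invf_div; congr (_ / (_ * Y _)); ring.
have -> : An (x - e) = Fv (x - e) / (Y (x - e) * Y x).
  by rewrite /An /a subrK invf_div.
move: (f0 (x - 3%:Z * e)) (f0 (x - 2%:Z * e)) (Fv0 (x - e)) (Fv0 (x - 2%:Z * e)).
move: (Y0 x) (Y0 (x - e)) (Y0 (x - 2%:Z * e)) (P0 x).
move=> H1 H2 H3 H4 H5 H6 H7 H8; field.
by rewrite ?H1 ?H2 ?H3 ?H4 ?H5 ?H6 ?H7 ?H8.
Qed.
End Alg.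


Definition phir t l m i : {rmorphism {mpoly Cc[nvars t l m]} -> Cy t l m} :=
  mmap ((@FracField.tofrac _ \o (@mpolyC _ _)) : {rmorphism _ -> _}) (r_img t l m i).
Lemma phirE t l m i P : r_poly t l m i P = phir t l m i P. Proof. by []. Qed.

Definition ev t l m (w : 'I_(nvars t l m) -> Cc) : {rmorphism {mpoly Cc[nvars t l m]} -> Cc} :=
  mmap (idfun : {rmorphism Cc -> Cc}) w.
Arguments ev : clear implicits.

Lemma phirX t l m i v : phir t l m i 'X_v = r_img t l m i v.
Proof. by rewrite [LHS]mmapX mmap1U. Qed.
Lemma evX t l m w v : ev t l m w 'X_v = w v.
Proof. by rewrite [LHS]mmapX mmap1U. Qed.
Lemma phirC t l m i c : phir t l m i c%:MP = (c%:MP)%:F.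
Proof. by rewrite [LHS]mmapC. Qed.

Lemma eqpos_dvd t l m a b : eqpos t l m a b = (NN t l m %| a - b)%Z.
Proof. by rewrite /eqpos eqz_mod_dvd. Qed.

Lemma eqpos_shift1 t l m q p c s :
  eqpos t l m (q + c) (p + c + s) = eqpos t l m q (p + s).
Proof. by rewrite !eqpos_dvd; congr (_ %| _)%Z; ring. Qed.
Lemma eqpos_shift0 t l m q p c :
  eqpos t l m (q + c) (p + c) = eqpos t l m q p.
Proof. by rewrite !eqpos_dvd; congr (_ %| _)%Z; ring. Qed.

Lemma qarrow_shift t l m x p y q c :
  qarrow t l m x (p + c) y (q + c) = qarrow t l m x p y q.
Proof.
by rewrite /qarrow; case: t; rewrite ?eqpos_shift1 ?eqpos_shift0.
Qed.

Lemma yy_per t l m j k z : yy t l m j (k + z * NN t l m) = yy t l m j k.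
Proof.
rewrite /yy /yvar; case: ifP => // _.
by rewrite (addrC k) modzMDl.
Qed.

Lemma yy_perc t l m j k z c : yy t l m j (k + z * NN t l m + c) = yy t l m j (k + c).
Proof. by rewrite addrAC yy_per. Qed.

Lemma FF_per t l m j k z : FF t l m j (k + z * NN t l m) = FF t l m j k.
Proof.
have hb : \prod_(j0 <- iota 1 l)
    ((if qarrow t l m j (k + z * NN t l m) j0 (k + z * NN t l m)
      then yy t l m j0 (k + z * NN t l m + sh t l (di t l j0)) else 1) *
     (if qarrow t l m j0 (k + z * NN t l m) j (k + z * NN t l m)
      then yy t l m j0 (k + z * NN t l m) else 1)) =
  \prod_(j0 <- iota 1 l)
    ((if qarrow t l m j k j0 k then yy t l m j0 (k + sh t l (di t l j0)) else 1) *
     (if qarrow t l m j0 k j k then yy t l m j0 k else 1)).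
  by apply: eq_bigr => j0 _; rewrite !qarrow_shift yy_perc yy_per.
rewrite /FF; case: t hb => hb; rewrite ?hb // ?yy_perc ?yy_per //.
Qed.

Inductive GI t l m (i : nat) : Cy t l m -> Prop :=
  | gi1 : GI i 1
  | giy j k : j != i -> GI i (yy t l m j k)
  | gim x y : GI i x -> GI i y -> GI i (x * y).

Section Conc.
Variables (t : ltype) (l m i : nat).
Local Notation N := (NN t l m).
Local Notation nv := (nvars t l m).
Local Notation C := (Cy t l m).
Hypothesis hN : 0 < N.
Hypothesis hi : (1 <= i <= l)%N.

Lemma hl : (1 <= l)%N. Proof. by case/andP: hi => h1 h2; apply: leq_trans h2. Qed.

Lemma absN : (absz N)%:Z = N.
Proof. by apply: gez0_abs; apply: ltW. Qed.

Lemma Npos : (0 < absz N)%N.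
Proof. by rewrite absz_gt0 gt_eqF. Qed.

Lemma nvarsE : nv = (l * absz N)%N.
Proof. by rewrite /nvars prednK // muln_gt0 hl Npos. Qed.

Lemma modN_lt k : (absz (k %% N)%Z < absz N)%N.
Proof.
have h0 : (0 <= (k %% N)%Z) by rewrite modz_ge0 // gt_eqF.
have h1 := ltz_mod k (negbT (gt_eqF hN)).
by rewrite -ltz_nat gez0_abs // absN.
Qed.

Lemma yvar_val j k : (1 <= j <= l)%N ->
  nat_of_ord (yvar t l m j k) = ((j.-1) * absz N + absz (k %% N)%Z)%N.
Proof.
move=> /andP [j1 jl]; rewrite /yvar inordK // prednK; last by rewrite muln_gt0 hl Npos.
have := modN_lt k.
have : (j.-1 < l)%N by rewrite prednK ?(leq_trans _ jl) //; case: j j1 jl.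
move=> h1 h2.
apply: (@leq_trans (j.-1 * absz N + absz N)%N); first by rewrite ltn_add2l.
have -> : (j.-1 * absz N + absz N = j.-1.+1 * absz N)%N by rewrite mulSn addnC.
by apply: leq_mul.
Qed.


Definition row (v : 'I_nv) : nat := ((v %/ absz N).+1)%N.
Definition pos (v : 'I_nv) : int := ((v %% absz N)%N)%:Z.

Lemma yvar_row j k : (1 <= j <= l)%N -> row (yvar t l m j k) = j.
Proof.
move=> hj; rewrite /row yvar_val // divnMDl ?Npos // divn_small ?modN_lt // addn0.
by case/andP: hj; case: j.
Qed.

Lemma modN_ge0 k : 0 <= (k %% N)%Z.
Proof. by rewrite modz_ge0 // gt_eqF. Qed.

Lemma yvar_pos j k : (1 <= j <= l)%N -> pos (yvar t l m j k) = (k %% N)%Z.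
Proof.
move=> hj; rewrite /pos yvar_val // modnMDl modn_small ?modN_lt //.
by rewrite gez0_abs // modN_ge0.
Qed.

Lemma row_range v : (1 <= row v <= l)%N.
Proof.
rewrite /row /= ltn_divLR ?Npos //.
by rewrite -nvarsE ltn_ord.
Qed.

Lemma v_yvar v : yvar t l m (row v) (pos v) = v.
Proof.
apply: ord_inj; rewrite yvar_val ?row_range //.
rewrite /row /= /pos modz_small; last first.
  apply/andP; split; first by [].
  by rewrite -[X in _ < X]absN ltz_nat ltn_mod Npos.
by rewrite /absz -divn_eq.
Qed.

Lemma yy_in j k : (1 <= j <= l)%N -> yy t l m j k = ('X_(yvar t l m j k))%:F.
Proof. by move=> hj; rewrite /yy hj. Qed.

Lemma r_img_other v : row v != i -> r_img t l m i v = ('X_v)%:F.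
Proof. by move=> h; rewrite /r_img -/(row v) (negbTE h). Qed.

Definition w1 : 'I_nv -> Cc := fun _ => 1.
Definition w2 : 'I_nv -> Cc := fun v => if row v == i then 2 else 1.
Local Notation pv1 := (pval (ev t l m w1)).
Local Notation pv2 := (pval (ev t l m w2)).
Local Notation pvr := (pval (phir t l m i)).

Lemma pv1_yy j k : pv1 (yy t l m j k) 1.
Proof.
rewrite /yy; case: ifP => hj; last exact: pval_1.
by have := pval_frac (ev t l m w1) 'X_(yvar t l m j k); rewrite evX.
Qed.

Lemma pv2_yy j k : pv2 (yy t l m j k) (if j == i then 2 else 1).
Proof.
rewrite /yy; case: ifP => hj; last first.
  have -> : (j == i) = false by apply/eqP => ji; move: hi; rewrite -ji hj.
  exact: pval_1.
have := pval_frac (ev t l m w2) 'X_(yvar t l m j k); rewrite evX /w2 yvar_row //.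
Qed.

Lemma pval_eqv (R : idomainType) (K : fieldType) (ph : {rmorphism R -> K}) x v w :
  pval ph x v -> v = w -> pval ph x w.
Proof. by move=> h <-. Qed.

Lemma GI_pv1 (x : C) : GI i x -> pv1 x 1.
Proof.
elim => [|j k _|y z _ h1 _ h2]; first exact: pval_1.
  exact: pv1_yy.
by apply: pval_eqv (pval_mul h1 h2) _; rewrite mulr1.
Qed.

Lemma GI_pv2 (x : C) : GI i x -> pv2 x 1.
Proof.
elim => [|j k hj|y z _ h1 _ h2]; first exact: pval_1.
  by apply: pval_eqv (pv2_yy j k) _; rewrite (negbTE hj).
by apply: pval_eqv (pval_mul h1 h2) _; rewrite mulr1.
Qed.

Lemma GI_pvr (x : C) : GI i x -> pvr x x.
Proof.
elim => [|j k hj|y z _ h1 _ h2]; first exact: pval_1.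
  rewrite /yy; case: ifP => hjr; last exact: pval_1.
  have := pval_frac (phir t l m i) 'X_(yvar t l m j k).
  by rewrite phirX r_img_other // yvar_row.
exact: pval_mul h1 h2.
Qed.

Lemma one_neq0 : (1 : Cc) != 0. Proof. exact: oner_neq0. Qed.

Lemma GI_neq0 (x : C) : GI i x -> x != 0.
Proof. by move=> h; apply: (pval_neq0 (GI_pv1 h)); exact: oner_neq0. Qed.

Lemma yy_neq0 j k : yy t l m j k != 0.
Proof. by apply: (pval_neq0 (pv1_yy j k)); exact: oner_neq0. Qed.

Section Main.
Let e := sh t l (di t l i).
Let M := (absz N %/ absz e)%N.
Hypothesis hMe : M%:Z * e = N.
Hypothesis hM2 : (2 <= M)%N.
Hypothesis hFF : forall k, GI i (FF t l m i k).
Local Notation Yc := (yy t l m i).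
Local Notation Fc := (FF t l m i).

Lemma Y0c x : Yc x != 0. Proof. exact: yy_neq0. Qed.
Lemma F0c x : Fc x != 0. Proof. exact: GI_neq0 (hFF x). Qed.
Lemma Yperc x : Yc (x - M%:Z * e) = Yc x.
Proof. by rewrite hMe -mulN1r yy_per. Qed.
Lemma Fperc x : Fc (x - M%:Z * e) = Fc x.
Proof. by rewrite hMe -mulN1r FF_per. Qed.

Lemma fyE k : fy t l m i k = f e M Yc Fc k. Proof. by []. Qed.
Lemma aaE k : aa t l m i k = a e Yc Fc k. Proof. by []. Qed.

Lemma pv1_a x : pv1 (a e Yc Fc x) 1.
Proof.
apply: pval_eqv (pval_div (pval_mul (pv1_yy i x) (pv1_yy i (x + e))) (GI_pv1 (hFF x)) _) _.
  exact: oner_neq0.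
by rewrite mulr1 invr1 mulr1.
Qed.

Lemma CcN0 n : (n.+1%:R : Cc) != 0.
Proof.
have h : (n.+1%:R : (Rdefinitions.R)[i]) != 0 by rewrite pnatr_eq0.
exact: h.
Qed.

Lemma f0c x : f e M Yc Fc x != 0.
Proof.
have h : pv1 (f e M Yc Fc x) (M%:R).
  rewrite /f; apply: pval_eqv.
    apply: pval_add; first exact: pval_1.
    apply: (@pval_sum _ _ _ _ _ _ (fun=> 1)) => p.
    apply: pval_eqv.
      apply: pval_inv (@pval_prod _ _ _ _ _ _ (fun=> 1) (fun q => pv1_a _)) _.
      by rewrite big1_eq; exact: oner_neq0.
    by rewrite big1_eq invr1.
  rewrite sumr_const card_ord -mulrS prednK //; exact: ltnW.
apply: (pval_neq0 h); have -> : M = M.-1.+1 by rewrite prednK //; exact: ltnW.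
exact: CcN0.
Qed.

Lemma P1c x : P e M Yc Fc x != 1.
Proof.
have ha : forall y, pv2 (a e Yc Fc y) 4.
  move=> y; apply: pval_eqv.
    apply: pval_div (pval_mul (pv2_yy i y) (pv2_yy i (y + e))) (GI_pv2 (hFF y)) _.
    exact: oner_neq0.
  by rewrite eqxx invr1 mulr1 -natrM.
have h4 : (4 : Cc) != 0 by have := CcN0 3.
have h : pv2 (P e M Yc Fc x) (4^-1 ^+ M).
  apply: pval_eqv (@pval_prod _ _ _ _ _ _ (fun=> 4^-1) (fun q => pval_inv (ha _) h4)) _.
  by rewrite prodr_const card_ord.
apply/eqP => h1; rewrite h1 in h.
have := pval_uniq h (@pval_1 _ _ _); rewrite exprVn => /eqP; rewrite invr_eq1.
rewrite -natrX => hh.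
have hh' : ((4 ^ M)%:R : (Rdefinitions.R)[i]) == 1%:R by exact: hh.
rewrite eqr_nat in hh'.
have : (1 < 4 ^ M)%N.
  by rewrite -(expn0 4) ltn_exp2l // (ltn_trans _ hM2).
by rewrite (eqP hh').
Qed.


Ltac hs := solve [exact: hM2 | exact: Y0c | exact: F0c | exact: Yperc | exact: Fperc
  | exact: f0c | exact: P1c].

Lemma G0c x : G e M Yc Fc x != 0.
Proof. apply: G0. exact: Y0c. exact: F0c. exact: f0c. Qed.
Lemma V0c x : V e M Yc Fc x != 0.
Proof. exact: (@V0 _ e M Yc Fc hM2 Y0c F0c Yperc Fperc f0c P1c x). Qed.

Lemma r_img_row v : row v = i -> r_img t l m i v = G e M Yc Fc (pos v).
Proof.
move=> hv; rewrite /r_img.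
change ((if row v == i then G e M Yc Fc (pos v) else ('X_v)%:F) = G e M Yc Fc (pos v)).
by rewrite hv eqxx.
Qed.

Lemma pvr_yyi k : pvr (Yc k) (G e M Yc Fc k).
Proof.
rewrite yy_in //.
have := pval_frac (phir t l m i) 'X_(yvar t l m i k).
rewrite phirX r_img_row ?yvar_row // yvar_pos //.
have -> : (k %% N)%Z = k + (- (k %/ N)%Z) * N by rewrite {2}(divz_eq k N); ring.
rewrite G_shift //.
- by move=> x; rewrite yy_per.
- by move=> x; rewrite FF_per.
Qed.

Lemma pvr_a x : pvr (a e Yc Fc x) (aG e M Yc Fc x).
Proof.
exact: pval_div (pval_mul (pvr_yyi x) (pvr_yyi (x + e))) (GI_pvr (hFF x)) (F0c x).
Qed.

Lemma aG0c x : aG e M Yc Fc x != 0.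
Proof.
rewrite /aG; apply: mulf_neq0; first by apply: mulf_neq0; exact: G0c.
by rewrite invr_eq0; exact: F0c.
Qed.

Lemma pvr_f x : pvr (f e M Yc Fc x) (V e M Yc Fc x).
Proof.
apply: pval_add; first exact: pval_1.
apply: pval_sum => p; apply: pval_inv.
  by apply: pval_prod => q; exact: pvr_a.
by apply/prodf_neq0 => q _; exact: aG0c.
Qed.

Lemma pvr_G k : pvr (G e M Yc Fc k) (Yc k).
Proof.
apply: pval_eqv.
  apply: pval_mul.
    apply: pval_div (pvr_f _) (pvr_f _) (V0c _).
  apply: pval_div (GI_pvr (hFF _)) (pvr_yyi _) (G0c _).
exact: (@R2 _ e M Yc Fc hM2 Y0c F0c Yperc Fperc f0c P1c k).
Qed.

Lemma pvr_X v : pvr (phir t l m i 'X_v) ('X_v)%:F.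
Proof.
rewrite phirX; case: (eqVneq (row v) i) => hv.
  rewrite r_img_row // -{2}(v_yvar v) -yy_in ?row_range // hv.
  exact: pvr_G.
rewrite r_img_other //; apply: pval_eqv (pval_frac _ 'X_v) _.
by rewrite phirX r_img_other.
Qed.

Lemma pval_exp (R : idomainType) (K : fieldType) (ph : {rmorphism R -> K}) x v k :
  pval ph x v -> pval ph (x ^+ k) (v ^+ k).
Proof.
move=> h; elim: k => [|k IH]; first by rewrite !expr0; exact: pval_1.
by rewrite !exprS; exact: pval_mul.
Qed.

Lemma pvr_poly p : pvr (phir t l m i p) p%:F.
Proof.
elim/mpolyind: p => [|c mm p _ _ IH]; first by rewrite !rmorph0; exact: pval_0.
rewrite !rmorphD /=; apply: pval_add => //.
rewrite -mul_mpolyC mpolyXE_id !rmorphM !rmorph_prod /=.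
apply: pval_mul.
  rewrite phirC; apply: pval_eqv (pval_frac _ c%:MP) _; exact: phirC.
apply: pval_prod => j; rewrite !rmorphXn; apply: pval_exp; exact: pvr_X.
Qed.

Lemma phir_inj p : phir t l m i p = 0 -> p = 0.
Proof.
move=> h; have := pvr_poly p; rewrite h => h'.
have := pval_uniq h' (@pval_0 _ _ _) => /eqP; rewrite tofrac_eq0 => /eqP //.
Qed.

Lemma pvr_r x : pvr x (r t l m i x).
Proof. exact: (pval_total phir_inj). Qed.

Lemma pvr_gen x : gen_subring (Kgen t l m i) x -> pvr x x.
Proof.
elim => [z [[j [k [hj hji [->|->]]]]|[k ->]] | | y z _ h1 _ h2 | y z _ h1 _ h2].
- exact: GI_pvr (@giy t l m i j k hji).
- apply: pval_inv (GI_pvr (@giy t l m i j k hji)) (yy_neq0 _ _).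
- apply: pval_eqv.
    apply: pval_mul (pvr_yyi k) (pval_add (@pval_1 _ _ _) (pval_inv (pvr_a k) (aG0c k))).
  exact: (@R3 _ e M Yc Fc hM2 Y0c F0c Yperc Fperc f0c k).
- exact: pval_1.
- exact: pval_sub.
- exact: pval_mul.
Qed.

Lemma r_fix x : gen_subring (Kgen t l m i) x -> r t l m i x = x.
Proof. by move=> h; apply: pval_uniq (pvr_r x) (pvr_gen h). Qed.

End Main.
End Conc.


Lemma bigmin_lo (s : seq nat) (F : nat -> rat) x0 lo :
  lo <= x0 -> (forall j, lo <= F j) -> (exists2 j, j \in s & F j = lo) ->
  \big[Num.min/x0]_(j <- s) F j = lo.
Proof.
move=> h0 hF [j js hj]; apply/le_anti/andP; split; last first.
  by elim: s {js} => [|x s IH]; rewrite ?big_nil ?big_cons // le_min hF IH.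
elim: s js => [//|x s IH]; rewrite big_cons inE => /orP [/eqP <-|/IH h].
  by rewrite ge_min hj lexx.
by rewrite ge_min h orbT.
Qed.

Lemma bigmax_hi (s : seq nat) (F : nat -> rat) x0 hi :
  x0 <= hi -> (forall j, F j <= hi) -> (exists2 j, j \in s & F j = hi) ->
  \big[Num.max/x0]_(j <- s) F j = hi.
Proof.
move=> h0 hF [j js hj]; apply/le_anti/andP; split.
  by elim: s {js} => [|x s IH]; rewrite ?big_nil ?big_cons // ge_max hF IH.
elim: s js => [//|x s IH]; rewrite big_cons inE => /orP [/eqP <-|/IH h].
  by rewrite le_max hj lexx.
by rewrite le_max h orbT.
Qed.

Lemma numq_natr n : numq (n%:R : rat) = n%:Z.
Proof. by rewrite -[n%:R]/((n%:Z)%:~R : rat) numq_int. Qed.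

Lemma eqpos_self t l m k c : 0 < c < NN t l m -> eqpos t l m k (k + c) = false.
Proof.
move=> /andP [c0 cN]; rewrite eqpos_dvd.
have -> : k - (k + c) = - c by ring.
rewrite dvdzE abszN; apply/negbTE/negP => h.
have hc : (0 < absz c)%N by rewrite absz_gt0 gt_eqF.
have := dvdn_leq hc h.
rewrite -lez_nat !gez0_abs.
- by rewrite leNgt cN.
- exact: ltW.
- exact: ltW (lt_trans c0 cN).
Qed.

Lemma GI_prod t l m i k : qarrow t l m i k i k = false ->
  @GI t l m i (\prod_(j <- iota 1 l)
     ((if qarrow t l m i k j k then yy t l m j (k + sh t l (di t l j)) else 1) *
      (if qarrow t l m j k i k then yy t l m j k else 1))).
Proof.
move=> hq; apply: (big_ind (@GI t l m i)); first exact: gi1.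
  by move=> x y; exact: gim.
move=> j _; case: (eqVneq j i) => [->|hj].
  by rewrite hq mul1r; exact: gi1.
by apply: gim; case: ifP => _; (exact: gi1 || exact: giy).
Qed.

Lemma facts_of t l m i (q e0 : nat) :
  NN t l m = (q * e0)%N%:Z -> sh t l (di t l i) = e0%:Z -> (0 < e0)%N -> (2 <= q)%N ->
  [/\ 0 < NN t l m,
      ((absz (NN t l m) %/ absz (sh t l (di t l i)))%N%:Z * sh t l (di t l i) = NN t l m)
    & (2 <= absz (NN t l m) %/ absz (sh t l (di t l i)))%N].
Proof.
move=> -> -> e0p q2; rewrite !absz_nat mulnK //; split => //.
by rewrite ltz_nat muln_gt0 e0p (leq_trans _ q2).
Qed.

Definition facts t l m i :=
  [/\ 0 < NN t l m,
      ((absz (NN t l m) %/ absz (sh t l (di t l i)))%N%:Z * sh t l (di t l i) = NN t l m),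
      (2 <= absz (NN t l m) %/ absz (sh t l (di t l i)))%N
    & forall k, @GI t l m i (FF t l m i k)].

Lemma half_rat : (1 / 2 : rat) = 2%:R^-1. Proof. by rewrite mul1r. Qed.

Lemma facts_B l m i : valid_type TB l -> (1 < m)%N -> (1 <= i <= l)%N -> facts TB l m i.
Proof.
move=> hv hm hi; have l2 : (2 <= l)%N by [].
have dminE : dmin TB l = 1 / 2.
  apply: bigmin_lo.
  - by rewrite /di; case: ifP => _; lra.
  - by move=> j; rewrite /di; case: ifP => _; lra.
  - by exists l; [rewrite mem_iota; lia | rewrite /di eqxx].
have dmaxE : dmax TB l = 1.
  apply: bigmax_hi.
  - by rewrite /di; case: ifP => _; lra.
  - by move=> j; rewrite /di; case: ifP => _; lra.
  - exists 1%N; first by rewrite mem_iota; lia.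
    by rewrite /di; case: ifP => // /eqP; lia.
have NNE : NN TB l m = (m * 2)%N%:Z.
  by rewrite /NN dminE dmaxE -numq_natr; congr numq; rewrite natrM; field.
have sh1 : sh TB l 1 = 2%N%:Z.
  by rewrite /sh dminE -numq_natr; congr numq; field.
have shh : sh TB l (1 / 2) = 1%N%:Z.
  by rewrite /sh dminE -numq_natr; congr numq; field.
have N2 : 0 < 2%N%:Z < NN TB l m by rewrite NNE ltz_nat; apply/andP; split => //; lia.
have N1 : 0 < 1%N%:Z < NN TB l m by rewrite NNE ltz_nat; apply/andP; split => //; lia.
have [f1 f2 f3] : [/\ 0 < NN TB l m,
      ((absz (NN TB l m) %/ absz (sh TB l (di TB l i)))%N%:Z * sh TB l (di TB l i) = NN TB l m)
    & (2 <= absz (NN TB l m) %/ absz (sh TB l (di TB l i)))%N].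
  case: (eqVneq i l) => hil.
    have she : sh TB l (di TB l i) = 1%N%:Z by rewrite /di hil eqxx.
    apply: (facts_of (q := (m * 2)%N) (e0 := 1%N)) => //; first by rewrite NNE muln1.
    lia.
  have she : sh TB l (di TB l i) = 2%N%:Z by rewrite /di (negbTE hil).
  apply: (facts_of (q := m) (e0 := 2%N)) => //.
split; [exact: f1|exact: f2|exact: f3|move=> k; rewrite /FF].
case: ifP => [/eqP il|nil].
  by apply: gim; apply: giy; rewrite il; apply/eqP; lia.
case: ifP => [/eqP il|nil'].
  by apply: gim; [apply: gim|]; apply: giy; apply/eqP; lia.
apply: GI_prod. rewrite /qarrow sh1 shh (eqpos_self k N2) (eqpos_self k N1).
apply/negbTE; rewrite !andbF /=.
have h1 : (i == i.-1) = false by apply/negbTE/eqP; lia.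
by rewrite h1 nil nil' /= !andbF.
Qed.

Lemma facts_C l m i : valid_type TC l -> (1 < m)%N -> (1 <= i <= l)%N -> facts TC l m i.
Proof.
move=> hv hm hi; have l2 : (2 <= l)%N by [].
have dminE : dmin TC l = 1.
  apply: bigmin_lo.
  - by rewrite /di; case: ifP => _; lra.
  - by move=> j; rewrite /di; case: ifP => _; lra.
  - exists 1%N; first by rewrite mem_iota; lia.
    by rewrite /di; case: ifP => // /eqP; lia.
have dmaxE : dmax TC l = 2.
  apply: bigmax_hi.
  - by rewrite /di; case: ifP => _; lra.
  - by move=> j; rewrite /di; case: ifP => _; lra.
  - by exists l; [rewrite mem_iota; lia | rewrite /di eqxx].
have NNE : NN TC l m = (m * 2)%N%:Z.
  by rewrite /NN dminE dmaxE -numq_natr; congr numq; rewrite natrM; field.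
have sh1 : sh TC l 1 = 1%N%:Z.
  by rewrite /sh dminE -numq_natr; congr numq; field.
have sh2 : sh TC l 2 = 2%N%:Z.
  by rewrite /sh dminE -numq_natr; congr numq; field.
have N2 : 0 < 2%N%:Z < NN TC l m by rewrite NNE ltz_nat; apply/andP; split => //; lia.
have N1 : 0 < 1%N%:Z < NN TC l m by rewrite NNE ltz_nat; apply/andP; split => //; lia.
have [f1 f2 f3] : [/\ 0 < NN TC l m,
      ((absz (NN TC l m) %/ absz (sh TC l (di TC l i)))%N%:Z * sh TC l (di TC l i) = NN TC l m)
    & (2 <= absz (NN TC l m) %/ absz (sh TC l (di TC l i)))%N].
  case: (eqVneq i l) => hil.
    have she : sh TC l (di TC l i) = 2%N%:Z by rewrite /di hil eqxx.
    by apply: (facts_of (q := m) (e0 := 2%N)).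
  have she : sh TC l (di TC l i) = 1%N%:Z by rewrite /di (negbTE hil).
  apply: (facts_of (q := (m * 2)%N) (e0 := 1%N)) => //; first by rewrite NNE muln1.
  lia.
split; [exact: f1|exact: f2|exact: f3|move=> k; rewrite /FF].
case: ifP => [/eqP il|nil].
  by apply: gim; apply: giy; rewrite il; apply/eqP; lia.
apply: GI_prod. rewrite /qarrow sh1 sh2 (eqpos_self k N2) (eqpos_self k N1).
apply/negbTE; rewrite !andbF /=.
have h1 : (i == i.-1) = false by apply/negbTE/eqP; lia.
by rewrite h1 nil /= !andbF.
Qed.

Lemma facts_F l m i : valid_type TF l -> (1 < m)%N -> (1 <= i <= l)%N -> facts TF l m i.
Proof.
move=> /eqP hl hm hi; subst l.
have dminE : dmin TF 4 = 1 / 2.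
  apply: bigmin_lo.
  - by rewrite /di /=; lra.
  - by move=> j; rewrite /di; case: ifP => _; lra.
  - by exists 3%N.
have dmaxE : dmax TF 4 = 1.
  apply: bigmax_hi.
  - by rewrite /di /=; lra.
  - by move=> j; rewrite /di; case: ifP => _; lra.
  - by exists 1%N.
have NNE : NN TF 4 m = (m * 2)%N%:Z.
  by rewrite /NN dminE dmaxE -numq_natr; congr numq; rewrite natrM; field.
have sh1 : sh TF 4 1 = 2%N%:Z.
  by rewrite /sh dminE -numq_natr; congr numq; field.
have shh : sh TF 4 (1 / 2) = 1%N%:Z.
  by rewrite /sh dminE -numq_natr; congr numq; field.
have N2 : 0 < 2%N%:Z < NN TF 4 m by rewrite NNE ltz_nat; apply/andP; split => //; lia.
have N1 : 0 < 1%N%:Z < NN TF 4 m by rewrite NNE ltz_nat; apply/andP; split => //; lia.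
have [f1 f2 f3] : [/\ 0 < NN TF 4 m,
      ((absz (NN TF 4 m) %/ absz (sh TF 4 (di TF 4 i)))%N%:Z * sh TF 4 (di TF 4 i) = NN TF 4 m)
    & (2 <= absz (NN TF 4 m) %/ absz (sh TF 4 (di TF 4 i)))%N].
  case: (leqP i 2) => hil.
    have she : sh TF 4 (di TF 4 i) = 2%N%:Z by rewrite /di hil.
    by apply: (facts_of (q := m) (e0 := 2%N)).
  have she : sh TF 4 (di TF 4 i) = 1%N%:Z by rewrite /di leqNgt hil.
  apply: (facts_of (q := (m * 2)%N) (e0 := 1%N)) => //; first by rewrite NNE muln1.
  lia.
split; [exact: f1|exact: f2|exact: f3|move=> k; rewrite /FF].
case: ifP => [/eqP il|nil3].
  by apply: gim; apply: giy; rewrite il.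
case: ifP => [/eqP il|nil2].
  by apply: gim; [apply: gim|]; apply: giy; rewrite il.
apply: GI_prod. rewrite /qarrow sh1 shh (eqpos_self k N2) (eqpos_self k N1).
apply/negbTE; rewrite !andbF /=.
by rewrite nil2 nil3 /= !andbF.
Qed.

Lemma facts_G l m i : valid_type TG l -> (1 < m)%N -> (1 <= i <= l)%N -> facts TG l m i.
Proof.
move=> /eqP hl hm hi; subst l.
have dminE : dmin TG 2 = 1.
  apply: bigmin_lo.
  - by rewrite /di /=; lra.
  - by move=> j; rewrite /di; case: ifP => _; lra.
  - by exists 1%N.
have dmaxE : dmax TG 2 = 3.
  apply: bigmax_hi.
  - by rewrite /di /=; lra.
  - by move=> j; rewrite /di; case: ifP => _; lra.
  - by exists 2%N.
have NNE : NN TG 2 m = (m * 3)%N%:Z.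
  by rewrite /NN dminE dmaxE -numq_natr; congr numq; rewrite natrM; field.
have sh1 : sh TG 2 1 = 1%N%:Z.
  by rewrite /sh dminE -numq_natr; congr numq; field.
have sh3 : sh TG 2 3 = 3%N%:Z.
  by rewrite /sh dminE -numq_natr; congr numq; field.
have N1 : 0 < 1%N%:Z < NN TG 2 m by rewrite NNE ltz_nat; apply/andP; split => //; lia.
have [f1 f2 f3] : [/\ 0 < NN TG 2 m,
      ((absz (NN TG 2 m) %/ absz (sh TG 2 (di TG 2 i)))%N%:Z * sh TG 2 (di TG 2 i) = NN TG 2 m)
    & (2 <= absz (NN TG 2 m) %/ absz (sh TG 2 (di TG 2 i)))%N].
  case: (eqVneq i 2) => hil.
    have she : sh TG 2 (di TG 2 i) = 3%N%:Z by rewrite /di hil.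
    by apply: (facts_of (q := m) (e0 := 3%N)).
  have she : sh TG 2 (di TG 2 i) = 1%N%:Z by rewrite /di (negbTE hil).
  apply: (facts_of (q := (m * 3)%N) (e0 := 1%N)) => //; first by rewrite NNE muln1.
  lia.
split; [exact: f1|exact: f2|exact: f3|move=> k; rewrite /FF].
case: ifP => [/eqP il|nil2].
  by apply: gim; [apply: gim|]; apply: giy; rewrite il.
apply: GI_prod. rewrite /qarrow sh1 (eqpos_self k N1).
apply/negbTE; rewrite !andbF /=.
by rewrite nil2 /= !andbF.
Qed.

Lemma facts_ADE t l m i : (t = TA \/ t = TD \/ t = TE) ->
  (1 < m)%N -> (1 <= i <= l)%N -> facts t l m i.
Proof.
move=> ht hm hi.
have hdi : forall j, di t l j = 1 by move=> j; case: ht => [->|[->|->]].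
have dminE : dmin t l = 1.
  apply: bigmin_lo => [|j|]; rewrite ?hdi //.
  exists 1%N; first by rewrite mem_iota; lia.
  by rewrite ?hdi.
have dmaxE : dmax t l = 1.
  apply: bigmax_hi => [|j|]; rewrite ?hdi //.
  exists 1%N; first by rewrite mem_iota; lia.
  by rewrite ?hdi.
have NNE : NN t l m = (m * 1)%N%:Z.
  by rewrite /NN dminE dmaxE -numq_natr; congr numq; rewrite natrM; field.
have sh1 : sh t l 1 = 1%N%:Z.
  by rewrite /sh dminE -numq_natr; congr numq; field.
have N1 : 0 < 1%N%:Z < NN t l m by rewrite NNE ltz_nat; apply/andP; split => //; lia.
have [f1 f2 f3] : [/\ 0 < NN t l m,
      ((absz (NN t l m) %/ absz (sh t l (di t l i)))%N%:Z * sh t l (di t l i) = NN t l m)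
    & (2 <= absz (NN t l m) %/ absz (sh t l (di t l i)))%N].
  have she : sh t l (di t l i) = 1%N%:Z by rewrite hdi.
  by apply: (facts_of (q := m) (e0 := 1%N)).
split; [exact: f1|exact: f2|exact: f3|move=> k].
have hC : Carrow t l i i = false.
  by rewrite /Carrow /dynkin_edge ltnn /= andbF.
have hq : qarrow t l m i k i k = false.
  move: hC N1 sh1; case: ht => [->|[->|->]] hC' N1' sh1'; rewrite /qarrow;
  by rewrite hC' sh1' (eqpos_self k N1') /= !andbF.
have -> : FF t l m i k = \prod_(j <- iota 1 l)
     ((if qarrow t l m i k j k then yy t l m j (k + sh t l (di t l j)) else 1) *
      (if qarrow t l m j k i k then yy t l m j k else 1)).
  by rewrite /FF; case: ht => [->|[->|->]].
exact: GI_prod.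
Qed.

Lemma all_facts t l m i : valid_type t l -> (1 < m)%N -> (1 <= i <= l)%N -> facts t l m i.
Proof.
case: t => hv hm hi.
- by apply: facts_ADE => //; left.
- exact: facts_B.
- exact: facts_C.
- by apply: facts_ADE => //; right; left.
- by apply: facts_ADE => //; right; right.
- exact: facts_F.
- exact: facts_G.
Qed.

End Helpers.
Import Helpers.

Theorem proposition4p13 (t : ltype) (l m : nat) :
  valid_type t l -> (1 < m)%N -> (l.-1 < m)%N ->
  forall (i : nat) (f : Cy t l m),
    (1 <= i <= l)%N -> Ychi t l m f -> r t l m i f = f.
Proof.
move=> hv hm _ i f hi hY.
have [f1 f2 f3 f4] := all_facts hv hm hi.
exact: (r_fix f1 hi f2 f3 f4 (hY i hi)).
Qed.
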